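(* For every assessment $\mathcal{A}\subseteq\mathscr{Q}$, $\mathrm{Ex}(\mathcal{A})=\mathrm{Rs}(\mathrm{Posi}(\mathscr{V}^s_{>0}\cup\mathcal{A}))$.
   Context: Let $\mathcal{X}$ be a nonempty set and let $\mathscr{V}$ be the real vector space of all functions $u:\mathcal{X}\to\mathbb{R}$ (options), with pointwise operations. For $u,v\in\mathscr{V}$, $u\le v$ iff $u(x)\le v(x)$ for all $x\in\mathcal{X}$, and $u<v$ iff $u\le v$ and $u\neq v$. Let $\mathscr{V}_{>0}=\{u\in\mathscr{V}:0<u\}$, $\mathscr{V}_{\le0}=\{u\in\mathscr{V}:u\le0\}$ and $\mathscr{V}^s_{>0}=\{\{u\}:u\in\mathscr{V}_{>0}\}$. Let $\mathscr{Q}$ be the set of all finite subsets of $\mathscr{V}$ (including $\emptyset$). For a positive integer $n$, $\mathbb{R}^{n,+}=\{\boldsymbol\lambda\in\mathbb{R}^n:\lambda_j\ge0\ \forall j,\ \sum_j\lambda_j>0\}$, and for $\boldsymbol\lambda\in\mathbb{R}^n$, $\mathbf u=(u_1,\dots,u_n)\in\mathscr{V}^n$, $\boldsymbol\lambda\mathbf u=\sum_{j=1}^n\lambda_ju_j$. A set of desirable option sets is any $K\subseteq\mathscr{Q}$. It is coherent if for all $A,B\in K$: (K0) $A\setminus\{0\}\in K$; (K1) $\{0\}\notin K$; (K2) $\mathscr{V}^s_{>0}\subseteq K$; (K3) $\{\boldsymbol\lambda(\mathbf u)\mathbf u:\mathbf u\in A\times B\}\in K$ for every map $\boldsymbol\lambda:A\times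 B\to\mathbb{R}^{2,+}$; (K4) $A\cup Q\in K$ for all $Q\in\mathscr{Q}$. $\bar{\mathbf K}$ denotes the set of coherent sets of desirable option sets. An assessment is any subset $\mathcal{A}\subseteq\mathscr{Q}$. Let $\bar{\mathbf K}(\mathcal A)=\{K\in\bar{\mathbf K}:\mathcal A\subseteq K\}$ and $\mathrm{Ex}(\mathcal A)=\bigcap\bar{\mathbf K}(\mathcal A)$, with the convention $\bigcap\emptyset=\mathscr{Q}$. For $\mathcal{A}\subseteq\mathscr{Q}$: $\mathrm{Posi}(\mathcal{A})=\{\{\boldsymbol\lambda(\mathbf u)\mathbf u:\mathbf u\in\times_{k=1}^nA_k\}: n\in\mathbb{N},\ A_1,\dots,A_n\in\mathcal A,\ \boldsymbol\lambda:\times_{k=1}^nA_k\to\mathbb{R}^{n,+}\}$ (where $\mathbb{N}$ denotes the positive integers), and $\mathrm{Rs}(\mathcal{A})=\{A\in\mathscr{Q}:\exists B\in\mathcal{A},\ B\setminus\mathscr{V}_{\le0}\subseteq A\}$. *)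

(* Defs.v *)
From Stdlib Require Import Reals List.
Open Scope R_scope.

Section Defs.
Variable X : Type.

Definition opt := X -> R.
Definition ozero : opt := fun _ => 0.
Definition oadd (u v : opt) : opt := fun x => u x + v x.
Definition oscale (a : R) (u : opt) : opt := fun x => a * u x.

Definition ole (u v : opt) : Prop := forall x, u x <= v x.
Definition olt (u v : opt) : Prop := ole u v /\ u <> v.

Definition Vgt0 (u : opt) : Prop := olt ozero u.
Definition Vle0 (u : opt) : Prop := ole u ozero.

Definition optset := opt -> Prop.

Definition finite_optset (A : optset) : Prop :=
  exists l : list opt, forall u, A u <-> In u l.

Definition Qset (A : optset) : Prop := finite_optset A.

Definition Vs_gt0 (A : optset) : Prop :=
  exists u, Vgt0 u /\ forall w, A w <-> w = u.

Fixpoint sumR (n : nat) (f : nat -> R) : R :=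
  match n with O => 0 | S m => sumR m f + f m end.
Fixpoint sumV (n : nat) (f : nat -> opt) : opt :=
  match n with O => ozero | S m => oadd (sumV m f) (f m) end.

Definition Rnplus (n : nat) (l : nat -> R) : Prop :=
  (forall k, (k < n)%nat -> 0 <= l k) /\ 0 < sumR n l.

Definition coherent (K : optset -> Prop) : Prop :=
  (forall A, K A -> Qset A) /\
  (forall A, K A -> K (fun u => A u /\ u <> ozero)) /\
  ~ K (fun u => u = ozero) /\
  (forall A, Vs_gt0 A -> K A) /\
  (forall A B, K A -> K B ->
     forall lam : opt -> opt -> R * R,
       (forall u v, A u -> B v ->
          Rnplus 2 (fun k => if Nat.eqb k 0 then fst (lam u v) else snd (lam u v))) ->
       K (fun w => exists u v, A u /\ B v /\
                    w = oadd (oscale (fst (lam u v)) u) (oscale (snd (lam u v)) v))) /\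
  (forall A Q, K A -> Qset Q -> K (fun u => A u \/ Q u)).

(* Ex(A) = intersection of all coherent K containing A  (empty intersection = Q) *)
Definition Ex (As : optset -> Prop) (C : optset) : Prop :=
  Qset C /\ forall K, coherent K -> (forall D, As D -> K D) -> K C.

(* n-tuples of options, encoded as nat -> opt, zero beyond index n (canonical) *)
Definition in_prod (n : nat) (Ak : nat -> optset) (u : nat -> opt) : Prop :=
  (forall k, (k < n)%nat -> Ak k (u k)) /\ (forall k, (n <= k)%nat -> u k = ozero).

Definition Posi (As : optset -> Prop) (C : optset) : Prop :=
  exists (n : nat) (Ak : nat -> optset) (lam : (nat -> opt) -> (nat -> R)),
    (1 <= n)%nat /\
    (forall k, (k < n)%nat -> As (Ak k)) /\
    (forall u, in_prod n Ak u -> Rnplus n (lam u)) /\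
    (forall w, C w <-> exists u, in_prod n Ak u /\
                         w = sumV n (fun k => oscale (lam u k) (u k))).

Definition Rs (As : optset -> Prop) (C : optset) : Prop :=
  Qset C /\ exists B, As B /\ forall u, B u -> ~ Vle0 u -> C u.

End Defs.

(* Main.v *)
Require Import Defs.
From Stdlib Require Import Reals List.
From Stdlib Require Import Lra Lia Psatz Classical ClassicalEpsilon FunctionalExtensionality PropExtensionality.
Open Scope R_scope.

Lemma sumR_ext n f g : (forall k, (k < n)%nat -> f k = g k) -> sumR n f = sumR n g.
Proof. induction n; simpl; intros H; auto. rewrite IHn by (intros; apply H; lia). rewrite H by lia. reflexivity. Qed.

Lemma sumR_app n1 n2 f : sumR (n1+n2) f = sumR n1 f + sumR n2 (fun k => f (n1+k)%nat).
Proof. induction n2; simpl. rewrite Nat.add_0_r; ring. rewrite Nat.add_succ_r; simpl; rewrite IHn2; ring. Qed.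

Lemma sumR_scale n c f : sumR n (fun k => c * f k) = c * sumR n f.
Proof. induction n; simpl; [ring| rewrite IHn; ring]. Qed.

Lemma sumR_nonneg n f : (forall k, (k<n)%nat -> 0 <= f k) -> 0 <= sumR n f.
Proof. induction n; simpl; intros H; [lra|]. assert (0 <= f n) by (apply H; lia).
  assert (0 <= sumR n f) by (apply IHn; intros; apply H; lia). lra. Qed.

Lemma sumV_eval X n f x : sumV X n f x = sumR n (fun k => f k x).
Proof. induction n; simpl; unfold oadd, ozero; auto. rewrite IHn; auto. Qed.

Lemma opt_ext X (u v : opt X) : (forall x, u x = v x) -> u = v.
Proof. intros H; apply functional_extensionality; exact H. Qed.

Lemma Qset_sub_list X (l : list (opt X)) (B : optset X) : (forall u, B u -> In u l) -> Qset X B.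
Proof.
  unfold Qset, finite_optset.
  revert B; induction l as [|y l IH]; intros B HB.
  - exists nil. intros u; split; [intros Hu; apply (HB u Hu) | intros []].
  - destruct (IH (fun u => B u /\ u <> y)) as [l' Hl'].
    { intros u [Hu Hne]. destruct (HB u Hu) as [->|H]; [congruence|exact H]. }
    destruct (classic (B y)) as [Hy|Hy].
    + exists (y :: l'). intros u. split.
      * intros Hu. destruct (classic (u = y)) as [->|Hne]; [left; reflexivity|right; apply Hl'; auto].
      * intros [<-|Hin]; [exact Hy | apply Hl' in Hin; tauto].
    + exists l'. intros u; split.
      * intros Hu. apply Hl'. split; auto. intros ->; contradiction.
      * intros Hin; apply Hl' in Hin; tauto.
Qed.

Lemma Qset_subset X (A B : optset X) : Qset X A -> (forall u, B u -> A u) -> Qset X B.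
Proof. intros [l Hl] H. apply (Qset_sub_list X l). intros u Hu; apply Hl; auto. Qed.

Lemma Qset_union X (A B : optset X) : Qset X A -> Qset X B -> Qset X (fun u => A u \/ B u).
Proof. intros [l1 H1] [l2 H2]. apply (Qset_sub_list X (l1 ++ l2)). intros u [Hu|Hu]; apply in_or_app;
  [left; apply H1|right; apply H2]; auto. Qed.

Lemma Qset_image2 X (A B : optset X) (f : opt X -> opt X -> opt X) : Qset X A -> Qset X B ->
  Qset X (fun w => exists u v, A u /\ B v /\ w = f u v).
Proof. intros [l1 H1] [l2 H2]. apply (Qset_sub_list X (flat_map (fun u => map (f u) l2) l1)).
  intros w (u & v & Hu & Hv & ->). apply in_flat_map. exists u. split; [apply H1; auto|].
  apply in_map. apply H2; auto. Qed.

Lemma Posi_single X (P : optset X -> Prop) A : P A -> Posi X P A.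
Proof.
  intros HA. exists 1%nat, (fun _ => A), (fun _ _ => 1). split; [lia|]. split; [intros; exact HA|]. split.
  - intros u _. split; [intros; lra | simpl; lra].
  - intros w; split.
    + intros Hw. exists (fun k => match k with O => w | _ => ozero X end). split.
      * split; [intros k Hk; destruct k; [exact Hw|lia] | intros k Hk; destruct k; [lia|reflexivity]].
      * apply opt_ext; intros x; simpl; unfold oadd, oscale, ozero; ring.
    + intros [u [[Hu _] ->]].
      replace (sumV X 1 (fun k => oscale X 1 (u k))) with (u 0%nat). apply Hu; lia.
      apply opt_ext; intros x; simpl; unfold oadd, oscale, ozero; ring.
Qed.

Definition Handle X (K : optset X -> Prop) (P : opt X -> Prop) (y : opt X) : Prop :=
  exists D, K D /\ forall x, D x -> exists a b, 0 <= a /\ 0 <= b /\ 0 < a + b /\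
     P (oadd X (oscale X a y) (oscale X b x)).

Lemma iter_lemma X K (HK : coherent X K) (P : opt X -> Prop) : forall l,
  (forall y, In y l -> P y \/ Handle X K P y) ->
  forall T, K T -> (forall t, T t -> In t l \/ P t) -> exists T', K T' /\ forall t, T' t -> P t.
Proof.
  destruct HK as (HQ & H0 & H1 & H2 & H3 & H4).
  induction l as [|y l IH]; intros Hl T HT HTl.
  - exists T; split; auto. intros t Ht; destruct (HTl t Ht) as [[]|H]; auto.
  - destruct (Hl y (or_introl eq_refl)) as [Py | [D [HD Hx]]].
    + apply (IH (fun z Hz => Hl z (or_intror Hz)) T HT).
      intros t Ht. destruct (HTl t Ht) as [[<-|Hin]|Pt]; auto.
    + assert (Hf : forall x, exists p : R * R, D x -> 0 <= fst p /\ 0 <= snd p /\ 0 < fst p + snd p /\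
          P (oadd X (oscale X (fst p) y) (oscale X (snd p) x))).
      { intros x. destruct (classic (D x)) as [Dx|nDx].
        - destruct (Hx x Dx) as (a & b & Ha & Hb & Hab & HP). exists (a,b). intros _. simpl. auto.
        - exists (1,0). intros Dx; contradiction. }
      set (g := fun x => proj1_sig (constructive_indefinite_description _ (Hf x))).
      assert (Hg : forall x, D x -> 0 <= fst (g x) /\ 0 <= snd (g x) /\ 0 < fst (g x) + snd (g x) /\
          P (oadd X (oscale X (fst (g x)) y) (oscale X (snd (g x)) x))).
      { intros x Dx. unfold g. destruct (constructive_indefinite_description _ (Hf x)) as [p Hp]. simpl. apply Hp; auto. }
      set (lam := fun t x => if excluded_middle_informative (t = y) then g x else (1,0)).
      assert (Hr : forall u v, T u -> D v ->
         Rnplus 2 (fun k => if Nat.eqb k 0 then fst (lam u v) else snd (lam u v))).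
      { intros u v Tu Dv. unfold lam. destruct (excluded_middle_informative (u = y)) as [_|_].
        -- destruct (Hg v Dv) as (Ha & Hb & Hab & _). split; [intros k Hk; destruct k as [|[|k]]; simpl; lra|simpl; lra].
        -- split; [intros k Hk; destruct k as [|[|k]]; simpl; lra|simpl; lra]. }
      apply (IH (fun z Hz => Hl z (or_intror Hz)) _ (H3 T D HT HD lam Hr)).
      intros w (t & x & Tt & Dx & ->). unfold lam. destruct (excluded_middle_informative (t = y)) as [->|Hne].
      -- right; apply Hg; auto.
      -- simpl. replace (oadd X (oscale X 1 t) (oscale X 0 x)) with t.
         ++ destruct (HTl t Tt) as [[<-|Hin]|Pt]; [contradiction|left;auto|right;auto].
         ++ apply opt_ext; intros z; unfold oadd, oscale; ring.
Qed.

Lemma removal X K (HK : coherent X K) (T Rr : optset X) : K T -> Qset X Rr ->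
  (forall t, T t -> Vle0 X t \/ Rr t) -> K Rr.
Proof.
  intros HT HR HTR. pose proof HK as HK'.
  destruct HK' as (HQ & H0 & H1 & H2 & H3 & H4).
  destruct (HQ T HT) as [l Hl].
  destruct (iter_lemma X K HK (fun t => Rr t \/ t = ozero X) l) with (T := T) as [T' [HT' HP]]; auto.
  - intros y Hy. apply Hl in Hy. destruct (HTR y Hy) as [Hle|Hr]; [|left; left; auto].
    destruct (classic (y = ozero X)) as [Hz|Hne]; [left; right; auto|right].
    exists (fun w => w = (fun x => - y x)). split.
    + apply H2. exists (fun x => - y x). split.
      * split. intros x; unfold ozero; specialize (Hle x); unfold ozero in Hle; lra.
        intros Heq; apply Hne; apply opt_ext; intros x.
        assert (E := f_equal (fun f => f x) Heq). simpl in E. unfold ozero in *. lra.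
      * intros w; split; auto.
    + intros x ->. exists 1, 1. split; [lra|split;[lra|split;[lra|]]]. right.
      apply opt_ext; intros z; unfold oadd, oscale, ozero; ring.
  - intros t Ht; left; apply Hl; auto.
  - assert (E : (fun u => (T' u /\ u <> ozero X) \/ Rr u) = Rr).
    { apply functional_extensionality; intros u; apply propositional_extensionality.
      split; [intros [[Tu Hne]|Hr]; [destruct (HP u Tu); [auto|contradiction]|auto] | auto]. }
    rewrite <- E. apply H4; auto.
Qed.

Definition CV X (C : optset X) (w : opt X) : Prop := Vle0 X w \/ C w.
Definition Tagged X (C : optset X) (j : nat) (a : nat -> opt X) (t : opt X) : Prop :=
  exists c (nu : nat -> R), 0 <= c /\ (forall k, (k < j)%nat -> 0 <= nu k) /\ 0 < c + sumR j nu /\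
    CV X C (oadd X (oscale X c t) (sumV X j (fun k => oscale X (nu k) (a k)))).
Definition Good X (K : optset X -> Prop) C j a := exists T, K T /\ forall t, T t -> Tagged X C j a t.
Definition extA X (a : nat -> opt X) j b : nat -> opt X := fun k => if Nat.eqb k j then b else a k.

Lemma good0 X K C a : coherent X K -> Qset X C -> Good X K C 0 a -> K C.
Proof.
  intros HK HC [T [HT Htag]].
  destruct (proj1 HK T HT) as [l Hl].
  destruct (iter_lemma X K HK (CV X C) l) with (T := T) as [T' [HT' HP]]; auto.
  - intros y Hy. apply Hl in Hy. right. exists T. split; auto. intros x _.
    destruct (Htag y Hy) as (c & nu & Hc & _ & Hs & HCV). simpl in Hs.
    exists c, 0. split; [lra|split;[lra|split;[lra|]]].
    replace (oadd X (oscale X c y) (oscale X 0 x)) with (oadd X (oscale X c y) (sumV X 0 (fun k => oscale X (nu k) (a k)))); auto.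
    apply opt_ext; intros z; simpl; unfold oadd, oscale, ozero; ring.
  - intros t Ht; left; apply Hl; auto.
  - apply (removal X K HK T'); auto.
Qed.

Lemma sumV_extA X j nu a y z :
  sumV X (S j) (fun k => oscale X (nu k) (extA X a j y k)) z =
  sumV X j (fun k => oscale X (nu k) (a k)) z + nu j * y z.
Proof.
  rewrite !sumV_eval. simpl. unfold oscale at 2, extA at 2. rewrite Nat.eqb_refl. f_equal.
  apply sumR_ext. intros k Hk. unfold extA. destruct (Nat.eqb_spec k j); [lia|reflexivity].
Qed.

Lemma goodstep X K C (B : optset X) j a : coherent X K -> K B ->
  (forall b, B b -> Good X K C (S j) (extA X a j b)) -> Good X K C j a.
Proof.
  intros HK HB H.
  destruct (proj1 HK B HB) as [l Hl].
  destruct (iter_lemma X K HK (Tagged X C j a) l) with (T := B) as [T' [HT' HP]]; auto.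
  - intros y Hy. apply Hl in Hy. right. destruct (H y Hy) as [D [HD Htag]].
    exists D. split; auto. intros x Dx.
    destruct (Htag x Dx) as (c & nu & Hc & Hnu & Hs & HCV). simpl in Hs.
    assert (Hnj : 0 <= nu j) by (apply Hnu; lia).
    assert (Hsn : 0 <= sumR j nu) by (apply sumR_nonneg; intros; apply Hnu; lia).
    destruct (Rlt_le_dec 0 (c + nu j)) as [Hp|Hp].
    + exists (nu j), c. split; [lra|split;[lra|split;[lra|]]].
      exists 1, nu. split; [lra|split;[intros; apply Hnu; lia|split;[lra|]]].
      replace (oadd X (oscale X 1 (oadd X (oscale X (nu j) y) (oscale X c x)))
                 (sumV X j (fun k => oscale X (nu k) (a k))))
        with (oadd X (oscale X c x) (sumV X (S j) (fun k => oscale X (nu k) (extA X a j y k)))); auto.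
      apply opt_ext; intros z. unfold oadd at 1 3. rewrite sumV_extA. unfold oadd, oscale. ring.
    + assert (c = 0) by lra. assert (nu j = 0) by lra. subst c.
      exists 1, 0. split; [lra|split;[lra|split;[lra|]]].
      exists 0, nu. split; [lra|split;[intros; apply Hnu; lia|split;[lra|]]].
      replace (oadd X (oscale X 0 (oadd X (oscale X 1 y) (oscale X 0 x)))
                 (sumV X j (fun k => oscale X (nu k) (a k))))
        with (oadd X (oscale X 0 x) (sumV X (S j) (fun k => oscale X (nu k) (extA X a j y k)))); auto.
      apply opt_ext; intros z. unfold oadd at 1 3. rewrite sumV_extA. unfold oadd, oscale.
      rewrite H1. ring.
  - intros t Ht; left; apply Hl; auto.
  - exists T'; split; auto.
Qed.

Lemma rs_ex X (x0 : X) As C : Rs X (Posi X (fun A => Vs_gt0 X A \/ As A)) C -> Ex X As C.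
Proof.
  intros [HC [B [HP HB]]]. split; [exact HC|]. intros K HK HAs.
  destruct HP as (n & Ak & lam & Hn & HAk & Hlam & HBiff).
  assert (HKk : forall k, (k < n)%nat -> K (Ak k)).
  { intros k Hk; destruct (HAk k Hk) as [Hv|Ha]; [apply (proj1 (proj2 (proj2 (proj2 HK)))); auto|apply HAs; auto]. }
  apply NNPP; intros HnK.
  assert (Hind : forall j, (j <= n)%nat -> exists a, (forall k, (k<j)%nat -> Ak k (a k)) /\ ~ Good X K C j a).
  { induction j.
    - intros _. exists (fun _ => ozero X). split; [intros; lia| intros G; apply HnK; apply (good0 X K C _ HK HC G)].
    - intros Hj. destruct IHj as [a [Ha HG]]; [lia|].
      assert (Hn' : ~ forall b, Ak j b -> Good X K C (S j) (extA X a j b)).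
      { intros H; apply HG; apply (goodstep X K C (Ak j) j a HK (HKk j ltac:(lia)) H). }
      apply not_all_ex_not in Hn'. destruct Hn' as [b Hb]. apply imply_to_and in Hb. destruct Hb as [Hb HGb].
      exists (extA X a j b). split; auto. intros k Hk. unfold extA.
      destruct (Nat.eqb_spec k j) as [->|Hne]; [exact Hb| apply Ha; lia]. }
  destruct (Hind n (le_n n)) as [a [Ha HG]]. apply HG.
  set (u := fun k => if Nat.ltb k n then a k else ozero X).
  assert (Hu : Defs.in_prod X n Ak u).
  { split; intros k Hk; unfold u.
    - rewrite (proj2 (Nat.ltb_lt _ _) Hk); auto.
    - rewrite (proj2 (Nat.ltb_ge _ _) Hk); auto. }
  destruct (Hlam u Hu) as [Hl0 Hl1].
  exists (fun w => w = (fun _ => 1)). split.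
  - apply (proj1 (proj2 (proj2 (proj2 HK)))). exists (fun _ => 1). split.
    + split. intros x; unfold ozero; lra.
      intros Heq. assert (E := f_equal (fun f => f x0) Heq). simpl in E. unfold ozero in E. lra.
    + intros w; split; auto.
  - intros t _. exists 0, (lam u). split; [lra|]. split; [auto|]. split; [lra|].
    set (w := sumV X n (fun k => oscale X (lam u k) (u k))).
    assert (Bw : B w) by (apply HBiff; exists u; auto).
    replace (oadd X (oscale X 0 t) (sumV X n (fun k => oscale X (lam u k) (a k)))) with w.
    + unfold CV. destruct (classic (Vle0 X w)); [left; auto | right; apply HB; auto].
    + apply opt_ext; intros z. unfold w, oadd. rewrite !sumV_eval.
      assert (E : sumR n (fun k => oscale X (lam u k) (u k) z) = sumR n (fun k => oscale X (lam u k) (a k) z)).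
      { apply sumR_ext; intros k Hk; unfold u, oscale; rewrite (proj2 (Nat.ltb_lt _ _) Hk); reflexivity. }
      rewrite E. unfold oscale. cbv beta. ring.
Qed.

Lemma rs_K3 X (Fam : optset X -> Prop) (A1 A2 : optset X) :
  Rs X (Posi X Fam) A1 -> Rs X (Posi X Fam) A2 ->
  forall lam : opt X -> opt X -> R * R,
  (forall u v, A1 u -> A2 v -> Rnplus 2 (fun k => if Nat.eqb k 0 then fst (lam u v) else snd (lam u v))) ->
  Rs X (Posi X Fam) (fun w => exists u v, A1 u /\ A2 v /\
      w = oadd X (oscale X (fst (lam u v)) u) (oscale X (snd (lam u v)) v)).
Proof.
  intros [HQ1 [B1 [HP1 HB1]]] [HQ2 [B2 [HP2 HB2]]] lam Hlam.
  split. { apply (Qset_image2 X A1 A2 (fun u v => oadd X (oscale X (fst (lam u v)) u) (oscale X (snd (lam u v)) v))); auto. }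
  destruct HP1 as (n1 & Ak1 & lam1 & Hn1 & HAk1 & Hlam1 & Hiff1).
  destruct HP2 as (n2 & Ak2 & lam2 & Hn2 & HAk2 & Hlam2 & Hiff2).
  set (s1 := fun (u : nat -> opt X) (k:nat) => if Nat.ltb k n1 then u k else ozero X).
  set (s2 := fun (u : nat -> opt X) (k:nat) => u (n1 + k)%nat).
  set (b1 := fun u => sumV X n1 (fun k => oscale X (lam1 (s1 u) k) (s1 u k))).
  set (b2 := fun u => sumV X n2 (fun k => oscale X (lam2 (s2 u) k) (s2 u k))).
  set (ab := fun u => if excluded_middle_informative (Vle0 X (b1 u)) then (1,0)
                      else if excluded_middle_informative (Vle0 X (b2 u)) then (0,1)
                      else lam (b1 u) (b2 u)).
  set (Ak := fun k => if Nat.ltb k n1 then Ak1 k else Ak2 (k - n1)%nat).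
  set (lamc := fun u k => if Nat.ltb k n1 then fst (ab u) * lam1 (s1 u) k
                          else snd (ab u) * lam2 (s2 u) (k - n1)%nat).
  set (W := fun w => exists u v, A1 u /\ A2 v /\
      w = oadd X (oscale X (fst (lam u v)) u) (oscale X (snd (lam u v)) v)).
  assert (Key : forall u, Defs.in_prod X (n1+n2) Ak u ->
     Defs.in_prod X n1 Ak1 (s1 u) /\ Defs.in_prod X n2 Ak2 (s2 u) /\
     (0 <= fst (ab u) /\ 0 <= snd (ab u) /\ 0 < fst (ab u) + snd (ab u) /\
      (Vle0 X (oadd X (oscale X (fst (ab u)) (b1 u)) (oscale X (snd (ab u)) (b2 u))) \/
       W (oadd X (oscale X (fst (ab u)) (b1 u)) (oscale X (snd (ab u)) (b2 u)))))).
  { intros u [Hu1 Hu2].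
    assert (Hs1 : Defs.in_prod X n1 Ak1 (s1 u)).
    { split; intros k Hk; unfold s1.
      - rewrite (proj2 (Nat.ltb_lt _ _) Hk). specialize (Hu1 k ltac:(lia)). unfold Ak in Hu1.
        rewrite (proj2 (Nat.ltb_lt _ _) Hk) in Hu1. exact Hu1.
      - rewrite (proj2 (Nat.ltb_ge _ _) Hk). reflexivity. }
    assert (Hs2 : Defs.in_prod X n2 Ak2 (s2 u)).
    { split; intros k Hk; unfold s2.
      - specialize (Hu1 (n1+k)%nat ltac:(lia)). unfold Ak in Hu1.
        rewrite (proj2 (Nat.ltb_ge _ _) (ltac:(lia) : (n1 <= n1+k)%nat)) in Hu1.
        replace (n1 + k - n1)%nat with k in Hu1 by lia. exact Hu1.
      - apply Hu2; lia. }
    split; [exact Hs1|split; [exact Hs2|]].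
    assert (HB1u : B1 (b1 u)) by (apply Hiff1; exists (s1 u); auto).
    assert (HB2u : B2 (b2 u)) by (apply Hiff2; exists (s2 u); auto).
    unfold ab. destruct (excluded_middle_informative (Vle0 X (b1 u))) as [Hv1|Hv1].
    - simpl. split; [lra|split;[lra|split;[lra|]]]. left. intros x.
      specialize (Hv1 x). unfold oadd, oscale, ozero in *. lra.
    - destruct (excluded_middle_informative (Vle0 X (b2 u))) as [Hv2|Hv2].
      + simpl. split; [lra|split;[lra|split;[lra|]]]. left. intros x.
        specialize (Hv2 x). unfold oadd, oscale, ozero in *. lra.
      + assert (HA1 : A1 (b1 u)) by (apply HB1; auto).
        assert (HA2 : A2 (b2 u)) by (apply HB2; auto).
        destruct (Hlam _ _ HA1 HA2) as [Hnn Hs].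
        assert (Ha0 := Hnn 0%nat ltac:(lia)). assert (Ha1 := Hnn 1%nat ltac:(lia)). simpl in Ha0, Ha1, Hs.
        split; [lra|split;[lra|split;[lra|]]]. right. exists (b1 u), (b2 u); auto. }
  assert (Hsplit : forall u, sumV X (n1+n2) (fun k => oscale X (lamc u k) (u k)) =
                    oadd X (oscale X (fst (ab u)) (b1 u)) (oscale X (snd (ab u)) (b2 u))).
  { intros u. apply opt_ext; intros x. rewrite sumV_eval, sumR_app. unfold oadd, oscale, b1, b2.
    rewrite !sumV_eval. rewrite <- !sumR_scale. f_equal.
    - apply sumR_ext; intros k Hk. unfold lamc, s1, oscale. destruct (Nat.ltb_spec k n1); [ring|lia].
    - apply sumR_ext; intros k Hk. unfold lamc, s2, oscale. destruct (Nat.ltb_spec (n1+k) n1); [lia|].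
      replace (n1 + k - n1)%nat with k by lia. ring. }
  exists (fun w => exists u, Defs.in_prod X (n1+n2) Ak u /\ w = sumV X (n1+n2) (fun k => oscale X (lamc u k) (u k))).
  split.
  - exists (n1+n2)%nat, Ak, lamc. split; [lia|]. split; [|split; [|intros w; split; auto]].
    + intros k Hk. unfold Ak. destruct (Nat.ltb_spec k n1); [apply HAk1; lia | apply HAk2; lia].
    + intros u Hu. destruct (Key u Hu) as (Hs1 & Hs2 & Hf & Hs & Hfs & _).
      destruct (Hlam1 _ Hs1) as [Hl1n Hl1s]. destruct (Hlam2 _ Hs2) as [Hl2n Hl2s].
      split.
      * intros k Hk. unfold lamc. destruct (Nat.ltb_spec k n1).
        -- apply Rmult_le_pos; auto.
        -- apply Rmult_le_pos; auto. apply Hl2n; lia.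
      * rewrite sumR_app.
        assert (E1 : sumR n1 (lamc u) = fst (ab u) * sumR n1 (lam1 (s1 u))).
        { rewrite <- sumR_scale. apply sumR_ext; intros k Hk. unfold lamc. destruct (Nat.ltb_spec k n1); [ring|lia]. }
        assert (E2 : sumR n2 (fun k => lamc u (n1 + k)%nat) = snd (ab u) * sumR n2 (lam2 (s2 u))).
        { rewrite <- sumR_scale. apply sumR_ext; intros k Hk. unfold lamc. destruct (Nat.ltb_spec (n1+k) n1); [lia|].
          replace (n1 + k - n1)%nat with k by lia. ring. }
        rewrite E1, E2.
        destruct (Rlt_le_dec 0 (fst (ab u))).
        -- assert (0 < fst (ab u) * sumR n1 (lam1 (s1 u))) by (apply Rmult_lt_0_compat; auto).
           assert (0 <= snd (ab u) * sumR n2 (lam2 (s2 u))) by (apply Rmult_le_pos; lra). lra.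
        -- assert (0 < snd (ab u) * sumR n2 (lam2 (s2 u))) by (apply Rmult_lt_0_compat; lra).
           assert (0 <= fst (ab u) * sumR n1 (lam1 (s1 u))) by (apply Rmult_le_pos; lra). lra.
  - intros w [u [Hu ->]] Hnle. rewrite Hsplit in *. destruct (Key u Hu) as (_ & _ & _ & _ & _ & [H|H]);
    [contradiction|exact H].
Qed.

Lemma rs_coherent X (Fam : optset X -> Prop) :
  (forall A, Vs_gt0 X A -> Fam A) ->
  ~ (exists B, Posi X Fam B /\ forall u, B u -> Vle0 X u) ->
  coherent X (Rs X (Posi X Fam)).
Proof.
  intros HV Hno. unfold coherent. split; [|split; [|split; [|split; [|split]]]].
  - intros A [HQ _]; exact HQ.
  - intros A [HQ [B [HB HBA]]]. split.
    + apply (Qset_subset X A); auto. intros u [Hu _]; auto.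
    + exists B; split; auto. intros u Bu Hn. split; [apply HBA; auto|].
      intros ->; apply Hn. intros x; unfold ozero; lra.
  - intros [HQ [B [HB HBA]]]. apply Hno. exists B; split; auto. intros u Bu.
    destruct (classic (Vle0 X u)) as [H|H]; auto. rewrite (HBA u Bu H). intros x; unfold ozero; lra.
  - intros A HA. split.
    + destruct HA as [u [_ Hu]]. exists (u :: nil). intros w; rewrite Hu; simpl; split; [auto| intros [H|[]]; auto].
    + exists A. split; [apply Posi_single; auto|auto].
  - intros A B HA HB lam Hlam. apply rs_K3; auto.
  - intros A Q [HQ [B [HB HBA]]] HQQ. split.
    + apply Qset_union; auto.
    + exists B; split; auto.
Qed.

Lemma ex_rs X (As : optset X -> Prop) (HAs : forall A, As A -> Qset X A) C :
  Ex X As C -> Rs X (Posi X (fun A => Vs_gt0 X A \/ As A)) C.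
Proof.
  intros [HC HE].
  destruct (classic (exists B, Posi X (fun A => Vs_gt0 X A \/ As A) B /\ forall u, B u -> Vle0 X u))
    as [[B [HB HBle]]|Hno].
  - split; auto. exists B; split; auto. intros u Bu Hn; exfalso; auto.
  - apply HE.
    + apply rs_coherent; auto.
    + intros D HD. split; [auto| exists D; split; [apply Posi_single; right; auto | auto]].
Qed.

Theorem mainTheorem14 (X : Type) (x0 : X) (As : optset X -> Prop) :
  (forall A, As A -> Qset X A) ->
  forall C : optset X,
    Ex X As C <-> Rs X (Posi X (fun A => Vs_gt0 X A \/ As A)) C.
Proof.
  intros HAs C. split; [apply ex_rs; auto | apply (rs_ex X x0)].
Qed.
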